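(* Let $a,b,c,d$ be admissible TDL parameters. (i) Let $V$ be a Gamma random variable with Laplace transform $E[e^{-tV}]=(1+bdt)^{-1/d}$, and let $X$ be a random variable whose conditional law given $V$ is $\mathrm{TDS}(a,V,c)$. Then $X\sim\mathrm{TDL}(a,b,c,d)$. (ii) If moreover $c\in(0,1]$, let $W$ be Gamma with Laplace transform $(1+bdc^a t)^{-1/d}$, let $Y$ have conditional law $\mathrm{TPS}(a,W,1/c-1)$ given $W$, and let $X'$ have conditional law Poisson with mean $Y$ given $(W,Y)$. Then $X'\sim\mathrm{TDL}(a,b,c,d)$.
   Context: $\operatorname{sgn}$ is the sign function with $\operatorname{sgn}(0)=0$. $\mathrm{TDS}(a,b,c)$: law on $\mathbb{N}$ with pgf $\exp(\operatorname{sgn}(a)b((1-c)^a-(1-cs)^a))$, $s\in[0,1]$ (the formula defines the law for any $b>0$ and admissible $a,c$). $\mathrm{TDL}(a,b,c,d)$: law on $\mathbb{N}$ with pgf $\big(1+\operatorname{sgn}(a)\,b\,d\,((1-cs)^a-(1-c)^a)\big)^{-1/d}$, $s\in[0,1]$; admissible parameters: $d>0$, $b>0$, and either $a\le0$, $c\in[0,1)$, or $a\in(0,1]$, $c\in[0,1]$. $\mathrm{TPS}(\gamma,\lambda,\theta)$ (Tweedie / tempered positive stable law): the law on $[0,\infty)$ with Laplace transform $\exp\big(\operatorname{sgn}(\gamma)\lambda(\theta^\gamma-(\theta+t)^\gamma)\big)$, $\mathrm{Re}(t)>0$, for $\lambda>0$ and either $\gamma\le1$, $\theta>0$, or $\gamma\in(0,1]$,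 $\theta=0$. Poisson with mean $0$ is the point mass at $0$. *)

(* Defs.v *)
From Stdlib Require Import Reals Lra Arith Factorial.
Open Scope R_scope.

Definition sgn (x : R) : R :=
  if Rlt_dec 0 x then 1 else if Rlt_dec x 0 then -1 else 0.

(* real power x^y for x >= 0, with the convention 0^y = 0
   (only used with y > 0 when x = 0 for admissible parameters) *)
Definition rpow (x y : R) : R := if Rlt_dec 0 x then Rpower x y else 0.

Definition has_pgf (p : nat -> R) (G : R -> R) : Prop :=
  forall s, 0 <= s <= 1 -> infinite_sum (fun k => p k * s ^ k) (G s).

Definition TDS_pgf (a b c : R) (s : R) : R :=
  exp (sgn a * b * (rpow (1 - c) a - rpow (1 - c * s) a)).

Definition TDL_pgf (a b c d : R) (s : R) : R :=
  rpow (1 + sgn a * b * d * (rpow (1 - c * s) a - rpow (1 - c) a)) (- (1 / d)).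

Definition is_TDS (a b c : R) (p : nat -> R) : Prop :=
  (forall k, 0 <= p k) /\ has_pgf p (TDS_pgf a b c).

Definition is_TDL (a b c d : R) (p : nat -> R) : Prop :=
  (forall k, 0 <= p k) /\ has_pgf p (TDL_pgf a b c d).

Definition TDL_admissible (a b c d : R) : Prop :=
  0 < d /\ 0 < b /\ ((a <= 0 /\ 0 <= c < 1) \/ ((0 < a <= 1) /\ 0 <= c <= 1)).

Definition Rint_0inf (f : R -> R) (l : R) : Prop :=
  (forall x y, 0 < x -> x <= y -> inhabited (Riemann_integrable f x y)) /\
  (forall eps, 0 < eps -> exists del M, 0 < del < M /\
     forall x y (pr : Riemann_integrable f x y),
       0 < x -> x < del -> M < y -> Rabs (RiemannInt pr - l) < eps).

Definition is_gamma_density (beta d : R) (g : R -> R) : Prop :=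
  (forall v, 0 <= g v) /\
  (forall t, 0 <= t -> Rint_0inf (fun v => g v * exp (- (t * v)))
                                 (rpow (1 + beta * t) (- (1 / d)))).

(* ---------- laws on [0,+oo), as (Daniell) expectation functionals ----------
   A Borel probability law mu on [0,+oo) is encoded by E f = \int f dmu, acting
   on test functions that are continuous and bounded on [0,+oo). *)
Definition test_fun (f : R -> R) : Prop :=
  (forall x, continuity_pt f x) /\ exists M, forall x, 0 <= x -> Rabs (f x) <= M.

Definition is_law_pos (E : (R -> R) -> R) : Prop :=
  (forall f g, (forall x, 0 <= x -> f x = g x) -> E f = E g) /\
  (forall f g, test_fun f -> test_fun g -> E (fun x => f x + g x) = E f + E g) /\
  (forall r f, test_fun f -> E (fun x => r * f x) = r * E f) /\
  (forall f, test_fun f -> (forall x, 0 <= x -> 0 <= f x) -> 0 <= E f) /\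
  E (fun _ => 1) = 1 /\
  (forall fn : nat -> R -> R, (forall n, test_fun (fn n)) ->
     (forall n x, 0 <= x -> fn (S n) x <= fn n x) ->
     (forall x, 0 <= x -> Un_cv (fun n => fn n x) 0) ->
     Un_cv (fun n => E (fn n)) 0).

Definition is_TPS (ga la th : R) (E : (R -> R) -> R) : Prop :=
  is_law_pos E /\
  forall t, 0 < t ->
    E (fun y => exp (- (t * y))) =
    exp (sgn ga * la * (rpow th ga - rpow (th + t) ga)).

Definition pois (k : nat) (y : R) : R := exp (- y) * y ^ k / INR (fact k).

(* Main.v *)
Require Import Defs.
From Stdlib Require Import Reals Lra Lia ZArith.
From Stdlib Require Import IndefiniteDescription FunctionalExtensionality.
From Coquelicot Require Import Coquelicot.
Open Scope R_scope.

Lemma nat_above (r : R) : exists N : nat, r < INR N /\ 0 < INR N.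
Proof.
  destruct (archimed (Rabs r)) as [H1 _].
  assert (0 <= Rabs r) by apply Rabs_pos.
  assert (Hz : (0 <= up (Rabs r))%Z).
  { apply le_IZR. lra. }
  exists (S (Z.to_nat (up (Rabs r)))).
  rewrite S_INR, INR_IZR_INZ, Z2Nat.id by auto.
  split. { pose proof (Rle_abs r). lra. } lra.
Qed.

Lemma ex_RInt_unif (f : R -> R) a b : a <= b ->
  (forall eps, 0 < eps -> exists phi : R -> R, ex_RInt phi a b /\
      forall t, a <= t <= b -> Rabs (f t - phi t) <= eps) ->
  ex_RInt f a b.
Proof.
  intros Hab H. apply ex_RInt_Reals_1. intro eps.
  set (d := eps / (2 * (b - a + 1))).
  assert (Hd : 0 < d).
  { unfold d. apply Rdiv_lt_0_compat. apply cond_pos. lra. }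
  destruct (constructive_indefinite_description _ (H d Hd)) as [phi [Hphi Hb]].
  pose proof (ex_RInt_Reals_0 _ _ _ Hphi) as pr.
  assert (He2 : 0 < eps / 2) by (pose proof (cond_pos eps); lra).
  destruct (pr (mkposreal _ He2)) as [phi1 [psi1 [H1 H2]]].
  exists phi1. exists (mkStepFun (StepFun_P28 1 psi1 (mkStepFun (StepFun_P4 a b d)))).
  split.
  - intros t Ht. simpl. unfold fct_cte.
    specialize (H1 t Ht). rewrite Rmin_left, Rmax_right in Ht by lra.
    specialize (Hb t Ht).
    replace (f t - phi1 t) with ((f t - phi t) + (phi t - phi1 t)) by ring.
    eapply Rle_trans. apply Rabs_triang. lra.
  - rewrite StepFun_P30. simpl. rewrite StepFun_P18.
    eapply Rle_lt_trans. apply Rabs_triang.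
    rewrite (Rabs_right (1 * _)).
    2:{ apply Rle_ge. rewrite Rmult_1_l. apply Rmult_le_pos; lra. }
    simpl in H2.
    assert (d * (b - a) = eps / 2 - d) by (unfold d; field; lra).
    lra.
Qed.

Lemma Rabs_norm (x : R) : norm x = Rabs x.
Proof. reflexivity. Qed.

Lemma ex_RInt_mult_const g a b c : ex_RInt g a b -> ex_RInt (fun y => g y * c) a b.
Proof.
  intro H. apply ex_RInt_Reals_1.
  apply Riemann_integrable_ext with (fun x => fct_cte 0 x + c * g x).
  { intros; unfold fct_cte; ring. }
  apply RiemannInt_P10. apply RiemannInt_P14. apply ex_RInt_Reals_0; auto.
Qed.

Lemma ex_RInt_mult_uc (g h : R -> R) a b : a <= b -> ex_RInt g a b ->
  (forall e, 0 < e -> exists d, 0 < d /\ forall t t', a <= t <= b -> a <= t' <= b ->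
       Rabs (t - t') <= d -> Rabs (h t - h t') <= e) ->
  ex_RInt (fun t => g t * h t) a b.
Proof.
  intros Hab Hg Huc.
  destruct (ex_RInt_ub g a b Hg) as [M HM].
  rewrite Rmin_left, Rmax_right in HM by lra.
  apply ex_RInt_unif; auto. intros e He.
  set (e' := e / (Rabs M + 1)).
  assert (He' : 0 < e') by (unfold e'; apply Rdiv_lt_0_compat; [lra| pose proof (Rabs_pos M); lra]).
  destruct (Huc e' He') as [d [Hd Hh]].
  destruct (nat_above ((b - a) / d)) as [N [HN HN0]].
  set (D := (b - a) / INR N).
  assert (HD0 : 0 <= D) by (unfold D; apply Rdiv_le_0_compat; lra).
  assert (HDd : D <= d).
  { unfold D. apply Rmult_le_reg_r with (INR N); auto.
    unfold Rdiv. rewrite Rmult_assoc, Rinv_l by lra.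
    assert (b - a < d * INR N).
    { apply Rmult_lt_reg_r with (/ d). apply Rinv_0_lt_compat; auto.
      rewrite (Rmult_comm d), Rmult_assoc, Rinv_r by lra. lra. }
    lra. }
  assert (HbN : a + INR N * D = b) by (unfold D; field; lra).
  assert (Hgb : forall t, a <= t <= b -> Rabs (g t) * e' <= e).
  { intros t Ht. specialize (HM t Ht). rewrite Rabs_norm in HM.
    unfold e'. apply Rle_trans with (Rabs M * (e / (Rabs M + 1))).
    apply Rmult_le_compat_r; [apply Rlt_le; exact He'|]. eapply Rle_trans; [apply HM| apply Rle_abs].
    assert (0 <= Rabs M) by apply Rabs_pos.
    apply Rmult_le_reg_r with (Rabs M + 1); [lra|].
    replace (Rabs M * (e / (Rabs M + 1)) * (Rabs M + 1)) with (Rabs M * e) by (field; lra).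
    replace (e * (Rabs M + 1)) with (Rabs M * e + e) by ring; lra. }
  assert (Hind : forall n, (n <= N)%nat -> exists phi, ex_RInt phi a (a + INR n * D) /\
     forall t, a <= t <= a + INR n * D -> Rabs (g t * h t - phi t) <= e).
  { induction n as [|n IH]; intros Hn.
    - exists (fun t => g t * h t). split.
      + simpl. rewrite Rmult_0_l, Rplus_0_r. apply ex_RInt_point.
      + intros t _. rewrite Rminus_diag, Rabs_R0. lra.
    - destruct (IH ltac:(lia)) as [phi [Hphi Hb]].
      set (al := a + INR n * D).
      assert (Hn' : INR (S n) <= INR N) by (apply le_INR; lia).
      assert (Hal : a <= al) by (unfold al; pose proof (pos_INR n); assert (0 <= INR n * D) by (apply Rmult_le_pos; lra); lra).
      assert (Hal2 : al + D <= b).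
      { rewrite <- HbN. unfold al. rewrite S_INR in Hn'. assert (0 <= (INR N - (INR n + 1)) * D) by (apply Rmult_le_pos; lra); assert (a + INR N * D - (a + INR n * D + D) = (INR N - (INR n + 1)) * D) by ring; lra. }
      exists (fun t => if Rle_dec t al then phi t else g t * h al). split.
      + rewrite S_INR. replace (a + (INR n + 1) * D) with (al + D) by (unfold al; ring).
        apply ex_RInt_Chasles with al.
        * apply ex_RInt_ext with phi; auto.
          intros x Hx. rewrite Rmin_left, Rmax_right in Hx by lra.
          destruct (Rle_dec x al); [reflexivity| lra].
        * apply ex_RInt_ext with (fun y => g y * h al).
          -- intros x Hx. rewrite Rmin_left, Rmax_right in Hx by lra.
             destruct (Rle_dec x al); [lra|]. reflexivity.
          -- apply ex_RInt_mult_const. apply (ex_RInt_Chasles_2 g a al (al + D)). lra.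
             apply (ex_RInt_Chasles_1 g a (al + D) b). lra. auto.
      + intros t Ht. destruct (Rle_dec t al).
        * apply Hb. unfold al in *. lra.
        * rewrite S_INR in Ht. replace (a + (INR n + 1) * D) with (al + D) in Ht by (unfold al; ring).
          replace (g t * h t - g t * h al) with (g t * (h t - h al)) by ring.
          rewrite Rabs_mult. eapply Rle_trans; [|apply (Hgb t); lra].
          apply Rmult_le_compat_l; [apply Rabs_pos|].
          apply Hh; try lra. rewrite Rabs_right by lra. lra. }
  destruct (Hind N (Nat.le_refl N)) as [phi [H1 H2]].
  rewrite HbN in H1, H2. exists phi; auto.
Qed.

Lemma RI_nonneg f a b (pr : Riemann_integrable f a b) : a <= b ->
  (forall t, a < t < b -> 0 <= f t) -> 0 <= RiemannInt pr.
Proof.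
  intros Hab H.
  pose proof (RiemannInt_P19 (RiemannInt_P14 a b 0) pr Hab) as K.
  rewrite RiemannInt_P15 in K. unfold fct_cte in K. rewrite Rmult_0_l in K. apply K.
  intros; unfold fct_cte; auto.
Qed.

Lemma RI_eq_ext f h a b (pr1 : Riemann_integrable f a b) (pr2 : Riemann_integrable h a b) :
  a <= b -> (forall t, a < t < b -> f t = h t) -> RiemannInt pr1 = RiemannInt pr2.
Proof.
  intros Hab H. apply Rle_antisym; apply RiemannInt_P19; auto;
  intros t Ht; rewrite (H t Ht); lra.
Qed.

Lemma RI_split_ge f x x0 y0 y (pr : Riemann_integrable f x y) (pr0 : Riemann_integrable f x0 y0) :
  x <= x0 -> x0 <= y0 -> y0 <= y -> (forall t, x < t < y -> 0 <= f t) ->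
  RiemannInt pr0 <= RiemannInt pr.
Proof.
  intros H1 H2 H3 Hp.
  pose proof (RiemannInt_P22 pr (conj H1 (Rle_trans _ _ _ H2 H3))) as p1.
  pose proof (RiemannInt_P23 pr (conj H1 (Rle_trans _ _ _ H2 H3))) as p2.
  pose proof (RiemannInt_P22 p2 (conj H2 H3)) as p3.
  pose proof (RiemannInt_P23 p2 (conj H2 H3)) as p4.
  rewrite <- (RiemannInt_P26 p1 p2 pr).
  rewrite <- (RiemannInt_P26 p3 p4 p2).
  rewrite (RiemannInt_P5 p3 pr0).
  assert (0 <= RiemannInt p1) by (apply RI_nonneg; auto; intros; apply Hp; lra).
  assert (0 <= RiemannInt p4) by (apply RI_nonneg; auto; intros; apply Hp; lra).
  lra.
Qed.

Lemma Rint_ext f h l : (forall v, 0 < v -> f v = h v) -> Rint_0inf f l -> Rint_0inf h l.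
Proof.
  intros E [H1 H2]. split.
  - intros x y Hx Hxy. destruct (H1 x y Hx Hxy) as [pr]. constructor.
    apply Riemann_integrable_ext with f; auto.
    intros t Ht. rewrite Rmin_left in Ht by lra. apply E; lra.
  - intros eps Heps. destruct (H2 eps Heps) as [del [M [HdM H]]].
    exists del, M. split; auto. intros x y pr Hx Hxd HMy.
    destruct (H1 x y Hx ltac:(lra)) as [prf].
    rewrite <- (RI_eq_ext f h x y prf pr). apply H; auto. lra.
    intros t Ht; apply E; lra.
Qed.

Lemma Rint_lin f h l1 l2 c : Rint_0inf f l1 -> Rint_0inf h l2 ->
  Rint_0inf (fun v => f v + c * h v) (l1 + c * l2).
Proof.
  intros [F1 F2] [G1 G2]. split.
  - intros x y Hx Hxy. destruct (F1 x y Hx Hxy) as [p1]. destruct (G1 x y Hx Hxy) as [p2].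
    constructor. apply RiemannInt_P10; auto.
  - intros eps Heps.
    assert (Hc : 0 < Rabs c + 1) by (pose proof (Rabs_pos c); lra).
    destruct (F2 (eps / 2)) as [d1 [M1 [HdM1 K1]]]; [lra|].
    destruct (G2 (eps / 2 / (Rabs c + 1))) as [d2 [M2 [HdM2 K2]]].
    { apply Rdiv_lt_0_compat; lra. }
    exists (Rmin d1 d2), (Rmax M1 M2). split.
    { split. apply Rmin_pos; lra.
      apply Rle_lt_trans with d1. apply Rmin_l. apply Rlt_le_trans with M1. lra. apply Rmax_l. }
    intros x y pr Hx Hxd HMy.
    assert (Hxd1 : x < d1) by (eapply Rlt_le_trans; [apply Hxd| apply Rmin_l]).
    assert (Hxd2 : x < d2) by (eapply Rlt_le_trans; [apply Hxd| apply Rmin_r]).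
    assert (HM1 : M1 < y) by (eapply Rle_lt_trans; [apply Rmax_l| apply HMy]).
    assert (HM2 : M2 < y) by (eapply Rle_lt_trans; [apply Rmax_r| apply HMy]).
    destruct (F1 x y Hx ltac:(lra)) as [p1]. destruct (G1 x y Hx ltac:(lra)) as [p2].
    rewrite (RiemannInt_P13 p1 p2 pr).
    specialize (K1 x y p1 Hx Hxd1 HM1). specialize (K2 x y p2 Hx Hxd2 HM2).
    replace (RiemannInt p1 + c * RiemannInt p2 - (l1 + c * l2)) with
      ((RiemannInt p1 - l1) + c * (RiemannInt p2 - l2)) by ring.
    eapply Rle_lt_trans. apply Rabs_triang. rewrite Rabs_mult.
    assert (Rabs c * Rabs (RiemannInt p2 - l2) <= eps / 2).
    { apply Rle_trans with ((Rabs c + 1) * (eps / 2 / (Rabs c + 1))).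
      apply Rmult_le_compat; try apply Rabs_pos; lra.
      right; field; lra. }
    lra.
Qed.

Lemma Rint_le f h l1 l2 : Rint_0inf f l1 -> Rint_0inf h l2 ->
  (forall v, 0 < v -> f v <= h v) -> l1 <= l2.
Proof.
  intros [F1 F2] [G1 G2] Hle.
  apply Rnot_lt_le. intro Hlt.
  set (eps := (l1 - l2) / 2).
  assert (He : 0 < eps) by (unfold eps; lra).
  destruct (F2 eps He) as [d1 [M1 [HdM1 K1]]].
  destruct (G2 eps He) as [d2 [M2 [HdM2 K2]]].
  set (x := Rmin d1 d2 / 2). set (y := Rmax M1 M2 + 1).
  assert (Hx : 0 < x) by (unfold x; assert (0 < Rmin d1 d2) by (apply Rmin_pos; lra); lra).
  assert (Hx1 : x < d1) by (unfold x; pose proof (Rmin_l d1 d2); assert (0 < Rmin d1 d2) by (apply Rmin_pos; lra); lra).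
  assert (Hx2 : x < d2) by (unfold x; pose proof (Rmin_r d1 d2); assert (0 < Rmin d1 d2) by (apply Rmin_pos; lra); lra).
  assert (Hy1 : M1 < y) by (unfold y; pose proof (Rmax_l M1 M2); lra).
  assert (Hy2 : M2 < y) by (unfold y; pose proof (Rmax_r M1 M2); lra).
  assert (Hxy : x <= y) by lra.
  destruct (F1 x y Hx Hxy) as [p1]. destruct (G1 x y Hx Hxy) as [p2].
  specialize (K1 x y p1 Hx Hx1 Hy1). specialize (K2 x y p2 Hx Hx2 Hy2).
  assert (RiemannInt p1 <= RiemannInt p2).
  { apply RiemannInt_P19; auto. intros t Ht; apply Hle; lra. }
  apply Rabs_def2 in K1. apply Rabs_def2 in K2. unfold eps in *. lra.
Qed.

Lemma Rint_zero : Rint_0inf (fun _ => 0) 0.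
Proof.
  split.
  - intros. constructor. apply RiemannInt_P14.
  - intros eps He. exists 1, 2. split; [lra|]. intros x y pr Hx _ _.
    change (RiemannInt pr) with (@RiemannInt (fct_cte 0) x y pr). rewrite (RiemannInt_P15 pr).
    rewrite Rmult_0_l, Rminus_0_r, Rabs_R0; auto.
Qed.

Lemma Rint_nonneg f l : (forall v, 0 < v -> 0 <= f v) -> Rint_0inf f l -> 0 <= l.
Proof. intros H K. apply (Rint_le _ _ _ _ Rint_zero K H). Qed.

Lemma Rint_partial_le f l x y (pr : Riemann_integrable f x y) :
  (forall v, 0 < v -> 0 <= f v) -> Rint_0inf f l -> 0 < x -> x <= y -> RiemannInt pr <= l.
Proof.
  intros Hp [F1 F2] Hx Hxy.
  apply Rnot_lt_le. intro Hlt.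
  set (eps := RiemannInt pr - l).
  assert (He : 0 < eps) by (unfold eps; lra).
  destruct (F2 eps He) as [d [M [HdM K]]].
  set (x' := Rmin x d / 2). set (y' := Rmax y M + 1).
  assert (0 < Rmin x d) by (apply Rmin_pos; lra).
  assert (Hx' : 0 < x') by (unfold x'; lra).
  assert (Hx1 : x' < d) by (unfold x'; pose proof (Rmin_r x d); lra).
  assert (Hx2 : x' <= x) by (unfold x'; pose proof (Rmin_l x d); lra).
  assert (Hy1 : M < y') by (unfold y'; pose proof (Rmax_r y M); lra).
  assert (Hy2 : y <= y') by (unfold y'; pose proof (Rmax_l y M); lra).
  destruct (F1 x' y' Hx' ltac:(lra)) as [p'].
  specialize (K x' y' p' Hx' Hx1 Hy1).
  assert (RiemannInt pr <= RiemannInt p').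
  { apply RI_split_ge; auto. intros; apply Hp; lra. }
  apply Rabs_def2 in K. unfold eps in *. lra.
Qed.

Lemma Rint_dominated f G LG :
  (forall v, 0 < v -> 0 <= f v) -> (forall v, 0 < v -> f v <= G v) ->
  (forall x y, 0 < x -> x <= y -> inhabited (Riemann_integrable f x y)) ->
  Rint_0inf G LG -> exists l, Rint_0inf f l /\ l <= LG.
Proof.
  intros Hp Hle Hi HG.
  set (E := fun z => exists x y (pr : Riemann_integrable f x y), 0 < x <= y /\ z = RiemannInt pr).
  assert (Hb : forall z, E z -> z <= LG).
  { intros z [x [y [pr [Hxy ->]]]].
    destruct HG as [G1 G2]. destruct (G1 x y ltac:(lra) ltac:(lra)) as [pG].
    apply Rle_trans with (RiemannInt pG).
    apply RiemannInt_P19; try lra. intros; apply Hle; lra.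
    apply Rint_partial_le; try lra; [|split; auto].
    intros v Hv; apply Rle_trans with (f v); [apply Hp; exact Hv| apply Hle; exact Hv]. }
  assert (Hne : exists z, E z).
  { destruct (Hi 1 1 Rlt_0_1 (Rle_refl 1)) as [pr]. exists (RiemannInt pr), 1, 1, pr. split; auto; lra. }
  destruct (completeness E (ex_intro _ LG Hb) Hne) as [l [Hub Hlub]].
  exists l. split; [split; auto|].
  - intros eps He.
    assert (exists z, E z /\ l - eps < z).
    { apply Classical_Prop.NNPP. intro Hn.
      assert (l <= l - eps); [|lra].
      apply Hlub. intros z Ez. apply Rnot_lt_le. intro; apply Hn; exists z; auto. }
    destruct H as [z [[x0 [y0 [pr0 [Hxy0 ->]]]] Hz]].
    exists x0, (y0 + 1). split; [lra|].
    intros x y pr Hx Hxd HMy.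
    assert (RiemannInt pr <= l) by (apply Hub; exists x, y, pr; split; auto; lra).
    assert (RiemannInt pr0 <= RiemannInt pr).
    { apply RI_split_ge; try lra. intros; apply Hp; lra. }
    apply Rabs_def1; lra.
  - apply Hlub. intros z Ez; apply Hb; auto.
Qed.

Lemma lim_abs_bound (U : nat -> R) l x B : Un_cv U l -> (forall m, Rabs (U m - x) <= B) ->
  Rabs (l - x) <= B.
Proof.
  intros Hc Hb. apply Rnot_lt_le. intro H.
  destruct (Hc (Rabs (l - x) - B)) as [N HN]; [lra|].
  specialize (HN N (Nat.le_refl N)). specialize (Hb N). unfold Rdist in HN.
  assert (Rabs (l - x) <= Rabs (U N - l) + Rabs (U N - x)).
  { replace (l - x) with (-(U N - l) + (U N - x)) by ring.
    eapply Rle_trans. apply Rabs_triang. rewrite Rabs_Ropp. lra. }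
  lra.
Qed.

Lemma Un_cv_const (c : R) : Un_cv (fun _ => c) c.
Proof. intros e He. exists 0%nat. intros. unfold Rdist. rewrite Rminus_diag, Rabs_R0; auto. Qed.

Lemma ps_zero0 (c : nat -> R) K :
  (forall k, Rabs (c k) <= K) ->
  (forall s, 0 < s <= /2 -> infinite_sum (fun k => c k * s ^ k) 0) -> c 0%nat = 0.
Proof.
  intros Hb Hs.
  assert (HK : 0 <= K) by (eapply Rle_trans; [apply Rabs_pos| apply (Hb 0%nat)]).
  assert (Hbd : forall s, 0 < s <= /2 -> Rabs (c 0%nat) <= 2 * K * s).
  { intros s Hs'.
    assert (Hpm : forall m, Rabs (sum_f_R0 (fun k => c k * s ^ k) m - c 0%nat) <= K * s * (1 - s ^ m) / (1 - s)).
    { induction m.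
      - simpl. replace (c 0%nat * 1 - c 0%nat) with 0 by ring. rewrite Rabs_R0.
        replace (K * s * (1 - 1) / (1 - s)) with 0 by (field; lra). lra.
      - rewrite tech5.
        replace (sum_f_R0 (fun k => c k * s ^ k) m + c (S m) * s ^ S m - c 0%nat) with
          ((sum_f_R0 (fun k => c k * s ^ k) m - c 0%nat) + c (S m) * s ^ S m) by ring.
        eapply Rle_trans. apply Rabs_triang.
        assert (Rabs (c (S m) * s ^ S m) <= K * s ^ S m).
        { rewrite Rabs_mult. rewrite (Rabs_right (s ^ S m)).
          apply Rmult_le_compat_r. apply pow_le; lra. apply Hb.
          apply Rle_ge, pow_le; lra. }
        replace (K * s * (1 - s ^ S m) / (1 - s)) with (K * s * (1 - s ^ m) / (1 - s) + K * s ^ S m)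
          by (simpl; field; lra).
        lra. }
    pose proof (lim_abs_bound _ _ (c 0%nat) (2 * K * s) (Hs s Hs')) as L.
    rewrite Rminus_0_l, Rabs_Ropp in L. apply L.
    intro m. eapply Rle_trans. apply Hpm.
    assert (0 <= s ^ m) by (apply pow_le; lra).
    apply Rmult_le_reg_r with (1 - s); [lra|].
    replace (K * s * (1 - s ^ m) / (1 - s) * (1 - s)) with (K * s * (1 - s ^ m)) by (field; lra).
    assert (0 <= K * s) by (apply Rmult_le_pos; lra).
    assert (K * s * (1 - s ^ m) <= K * s) by nra.
    assert (K * s <= 2 * K * s * (1 - s)) by nra. lra. }
  destruct (Req_dec (c 0%nat) 0) as [E|E]; auto. exfalso.
  assert (HK' : 0 < K) by (pose proof (Rabs_pos_lt _ E); pose proof (Hb 0%nat); lra).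
  set (s := Rmin (/2) (Rabs (c 0%nat) / (4 * K))).
  assert (Hs0 : 0 < s) by (unfold s; apply Rmin_pos; [lra| apply Rdiv_lt_0_compat; [apply Rabs_pos_lt; auto| lra]]).
  assert (Hs1 : s <= /2) by apply Rmin_l.
  assert (Hs2 : s <= Rabs (c 0%nat) / (4 * K)) by apply Rmin_r.
  specialize (Hbd s (conj Hs0 Hs1)).
  assert (2 * K * s <= Rabs (c 0%nat) / 2).
  { apply Rle_trans with (2 * K * (Rabs (c 0%nat) / (4 * K))).
    apply Rmult_le_compat_l; lra. right; field; lra. }
  pose proof (Rabs_pos_lt _ E). lra.
Qed.

Lemma ps_shift (c : nat -> R) : c 0%nat = 0 ->
  (forall s, 0 < s <= /2 -> infinite_sum (fun k => c k * s ^ k) 0) ->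
  (forall s, 0 < s <= /2 -> infinite_sum (fun k => c (S k) * s ^ k) 0).
Proof.
  intros H0 Hs s Hs'.
  assert (Hid : forall m, sum_f_R0 (fun k => c (S k) * s ^ k) m * s = sum_f_R0 (fun k => c k * s ^ k) (S m)).
  { induction m.
    - simpl. rewrite H0. ring.
    - rewrite tech5, Rmult_plus_distr_r, IHm, (tech5 _ (S m)). simpl. ring. }
  intros e He. destruct (Hs s Hs' (e * s)) as [N HN]. { apply Rmult_lt_0_compat; lra. }
  exists N. intros n Hn. specialize (HN (S n) ltac:(lia)). unfold Rdist in *.
  rewrite <- Hid, Rminus_0_r in HN. rewrite Rminus_0_r.
  rewrite Rabs_mult, (Rabs_right s) in HN by lra.
  apply Rmult_lt_reg_r with s; lra.
Qed.

Lemma ps_zero (c : nat -> R) K :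
  (forall k, Rabs (c k) <= K) ->
  (forall s, 0 < s <= /2 -> infinite_sum (fun k => c k * s ^ k) 0) -> forall k, c k = 0.
Proof.
  intros Hb Hs k. revert c Hb Hs. induction k; intros c Hb Hs.
  - eapply ps_zero0; eauto.
  - apply (IHk (fun k => c (S k))); auto.
    apply ps_shift; auto. eapply ps_zero0; eauto.
Qed.

Lemma ps_unique (a b : nat -> R) M A :
  (forall k, Rabs (a k) <= M) -> (forall k, Rabs (b k) <= M) ->
  (forall s, 0 < s <= /2 -> infinite_sum (fun k => a k * s ^ k) (A s)) ->
  (forall s, 0 < s <= /2 -> infinite_sum (fun k => b k * s ^ k) (A s)) ->
  forall k, a k = b k.
Proof.
  intros Ha Hb HA HB k.
  assert (a k - b k = 0); [|lra].
  apply (ps_zero (fun k => a k - b k) (2 * M)).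
  - intro j. unfold Rminus. eapply Rle_trans. apply Rabs_triang. rewrite Rabs_Ropp.
    pose proof (Ha j); pose proof (Hb j); lra.
  - intros s Hs. pose proof (CV_minus _ _ _ _ (HA s Hs) (HB s Hs)) as K.
    rewrite Rminus_diag in K. intros e He. destruct (K e He) as [N HN]. exists N.
    intros n Hn. specialize (HN n Hn). rewrite <- minus_sum in HN.
    erewrite sum_eq; [apply HN|]. intros; simpl; ring.
Qed.

Lemma dsum_bound (n : nat) : forall (a b : nat -> R) B, (forall k, 0 <= a k) -> (forall k, 0 <= b k) ->
  (forall m, sum_f_R0 b m <= B) ->
  sum_f_R0 (fun k => sum_f_R0 (fun j => a j * b (k - j)%nat) k) n <= sum_f_R0 a n * B.
Proof.
  induction n; intros a b B Ha Hb HB.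
  - simpl. apply Rmult_le_compat_l; auto. apply (HB 0%nat).
  - rewrite (decomp_sum _ (S n)) by lia. simpl pred.
    assert (E : forall k, sum_f_R0 (fun j => a j * b (S k - j)%nat) (S k) =
        a 0%nat * b (S k) + sum_f_R0 (fun j => a (S j) * b (k - j)%nat) k).
    { intro k. rewrite decomp_sum by lia. simpl pred. replace (S k - 0)%nat with (S k) by lia. reflexivity. }
    rewrite (sum_eq (fun i => sum_f_R0 (fun j => a j * b (S i - j)%nat) (S i)) (fun i => a 0%nat * b (S i) + sum_f_R0 (fun j => a (S j) * b (i - j)%nat) i) n) by (intros; apply E).
    rewrite sum_plus. replace (sum_f_R0 (fun l => a 0%nat * b (S l)) n) with (a 0%nat * sum_f_R0 (fun l => b (S l)) n) by (rewrite scal_sum; apply sum_eq; intros; ring).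
    specialize (IHn (fun j => a (S j)) b B (fun k => Ha (S k)) Hb HB).
    rewrite (decomp_sum a (S n)) by lia. simpl pred. simpl sum_f_R0 at 1.
    replace (0 - 0)%nat with 0%nat by lia.
    assert (b 0%nat + sum_f_R0 (fun i => b (S i)) n <= B).
    { pose proof (HB (S n)) as HBn. rewrite (decomp_sum b (S n)) in HBn by lia. simpl pred in HBn. lra. }
    pose proof (Ha 0%nat). nra.
Qed.

Lemma term_le_sum (f : nat -> R) k : (forall j, 0 <= f j) -> f k <= sum_f_R0 f k.
Proof.
  intros H. destruct k. simpl; lra. rewrite tech5.
  pose proof (cond_pos_sum f k H). lra.
Qed.
Definition good_family (r : R -> nat -> R) (phi : R -> R) : Prop :=
  (forall v, 0 < v -> forall k, 0 <= r v k) /\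
  (forall v, 0 < v -> forall s, 0 <= s <= 1 ->
     infinite_sum (fun k => r v k * s ^ k) (exp (v * phi s))) /\
  phi 1 = 0.

Lemma inf_sum_ext (f g : nat -> R) l : (forall k, f k = g k) -> infinite_sum f l -> infinite_sum g l.
Proof. intros E H. replace g with f; auto. extensionality k; auto. Qed.

Section GF.
Lemma gf_sum1 r phi v : good_family r phi -> 0 < v -> infinite_sum (r v) 1.
Proof.
  intros [H0 [H1 H2]] Hv. pose proof (H1 v Hv 1 ltac:(lra)) as K.
  rewrite H2, Rmult_0_r, exp_0 in K. revert K. apply inf_sum_ext.
  intro k. rewrite pow1; ring.
Qed.

Lemma gf_psum_le1 r phi v n : good_family r phi -> 0 < v -> sum_f_R0 (r v) n <= 1.
Proof.
  intros G Hv. apply sum_incr. apply (gf_sum1 r phi v G Hv). apply (proj1 G v Hv).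
Qed.

Lemma gf_le1 r phi v k : good_family r phi -> 0 < v -> r v k <= 1.
Proof.
  intros G Hv. eapply Rle_trans. apply term_le_sum. apply (proj1 G v Hv).
  apply (gf_psum_le1 r phi v k G Hv).
Qed.

Lemma gf_r0 r phi v : good_family r phi -> 0 < v -> r v 0%nat = exp (v * phi 0).
Proof.
  intros [H0 [H1 H2]] Hv. pose proof (H1 v Hv 0 ltac:(lra)) as K.
  apply (UL_sequence (fun n => sum_f_R0 (fun k => r v k * 0 ^ k) n)); auto.
  replace (fun n => sum_f_R0 (fun k => r v k * 0 ^ k) n) with (fun _ : nat => r v 0%nat).
  apply Un_cv_const.
  extensionality n. induction n. simpl; ring. rewrite tech5, <- IHn. simpl. ring.
Qed.

Lemma gf_conv r phi v w k : good_family r phi -> 0 < v -> 0 < w ->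
  r (v + w) k = sum_f_R0 (fun j => r v j * r w (k - j)%nat) k.
Proof.
  intros G Hv Hw. destruct G as [H0 [H1 H2]] eqn:EG.
  assert (Hvw : 0 < v + w) by lra.
  apply (ps_unique (r (v + w)) (fun k => sum_f_R0 (fun j => r v j * r w (k - j)%nat) k) 1 (fun s => exp ((v + w) * phi s))).
  - intro j. rewrite Rabs_right by (apply Rle_ge, H0; lra). apply (gf_le1 r phi); auto.
  - intro j. rewrite Rabs_right.
    + apply Rle_trans with (sum_f_R0 (r v) j). apply sum_Rle. intros i _.
      pose proof (H0 v Hv i). pose proof (gf_le1 r phi w (j - i)%nat G Hw).
      pose proof (H0 w Hw (j - i)%nat). nra.
      apply (gf_psum_le1 r phi v j G Hv).
    + apply Rle_ge, cond_pos_sum. intro i. apply Rmult_le_pos; auto.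
  - intros s Hs. apply H1; auto. lra.
  - intros s Hs.
    assert (A : is_series (fun k => r v k * s ^ k) (exp (v * phi s))) by (apply is_series_Reals, H1; lra).
    assert (B : is_series (fun k => r w k * s ^ k) (exp (w * phi s))) by (apply is_series_Reals, H1; lra).
    pose proof (is_series_mult_pos _ _ _ _ A B) as C.
    apply is_series_Reals.
    replace ((v + w) * phi s) with (v * phi s + w * phi s) by ring. rewrite exp_plus.
    replace (fun n => sum_f_R0 (fun j => r v j * r w (n - j)%nat) n * s ^ n) with
       (fun n => sum_f_R0 (fun k => r v k * s ^ k * (r w (n - k)%nat * s ^ (n - k))) n).
    apply C.
    + intro n. apply Rmult_le_pos. apply H0; auto. apply pow_le; lra.
    + intro n. apply Rmult_le_pos. apply H0; auto. apply pow_le; lra.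
    + extensionality n. rewrite Rmult_comm, scal_sum. apply sum_eq. intros i Hi.
      replace (s ^ n) with (s ^ i * s ^ (n - i)). ring.
      rewrite <- pow_add. f_equal. lia.
Qed.

Lemma gf_lip r phi v w k : good_family r phi -> 0 < v -> 0 < w ->
  Rabs (r (v + w) k - r w k) <= 2 * (1 - exp (v * phi 0)).
Proof.
  intros G Hv Hw. rewrite (gf_conv r phi v w k G Hv Hw).
  pose proof (gf_r0 r phi v G Hv) as E0. rewrite <- E0.
  pose proof (gf_le1 r phi w k G Hw). pose proof (proj1 G w Hw k).
  pose proof (proj1 G v Hv 0%nat).
  destruct k.
  - simpl. replace (r v 0%nat * r w 0%nat - r w 0%nat) with (- ((1 - r v 0%nat) * r w 0%nat)) by ring.
    rewrite Rabs_Ropp, Rabs_right by (apply Rle_ge, Rmult_le_pos; [pose proof (gf_le1 r phi v 0 G Hv)|]; lra).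
    pose proof (gf_le1 r phi v 0 G Hv). nra.
  - rewrite decomp_sum by lia. simpl pred. replace (S k - 0)%nat with (S k) by lia.
    set (R0 := sum_f_R0 (fun i => r v (S i) * r w (S k - S i)%nat) k).
    assert (HR0 : 0 <= R0) by (apply cond_pos_sum; intro i; apply Rmult_le_pos; apply (proj1 G); auto).
    assert (HR1 : R0 <= 1 - r v 0%nat).
    { apply Rle_trans with (sum_f_R0 (fun i => r v (S i)) k).
      apply sum_Rle. intros i _. pose proof (gf_le1 r phi w (S k - S i)%nat G Hw).
      pose proof (proj1 G v Hv (S i)). nra.
      pose proof (gf_psum_le1 r phi v (S k) G Hv) as K.
      rewrite decomp_sum in K by lia. simpl pred in K. lra. }
    apply Rabs_le. split; nra.
Qed.

Lemma gf_mono r phi v w n : good_family r phi -> 0 < v -> 0 < w ->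
  sum_f_R0 (r (v + w)) n <= sum_f_R0 (r v) n.
Proof.
  intros G Hv Hw.
  rewrite (sum_eq _ (fun k => sum_f_R0 (fun j => r v j * r w (k - j)%nat) k)) by
    (intros; apply (gf_conv r phi); auto).
  rewrite <- (Rmult_1_r (sum_f_R0 (r v) n)).
  apply dsum_bound. apply (proj1 G); auto. apply (proj1 G); auto.
  intro m. apply (gf_psum_le1 r phi w m G Hw).
Qed.
End GF.
Lemma exp_le (x y : R) : x <= y -> exp x <= exp y.
Proof. intros [H|H]. left; apply exp_increasing; auto. subst; lra. Qed.

Lemma gf_uc r phi k : good_family r phi -> forall e, 0 < e -> exists d, 0 < d /\
  forall t t', 0 < t -> 0 < t' -> Rabs (t - t') <= d -> Rabs (r t k - r t' k) <= e.
Proof.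
  intros G e He. set (c0 := Rabs (phi 0)).
  assert (Hc0 : 0 <= c0) by apply Rabs_pos.
  exists (e / (2 * c0 + 1)). split. apply Rdiv_lt_0_compat; lra.
  assert (Key : forall t u, 0 < t -> 0 < u -> u <= e / (2 * c0 + 1) -> Rabs (r (u + t) k - r t k) <= e).
  { intros t u Ht Hu Hud. eapply Rle_trans. apply (gf_lip r phi u t k G Hu Ht).
    pose proof (exp_ineq1_le (u * phi 0)).
    assert (- (u * phi 0) <= u * c0).
    { unfold c0. rewrite Ropp_mult_distr_r. apply Rmult_le_compat_l; [lra|].
      rewrite <- Rabs_Ropp. apply Rle_abs. }
    assert (u * (2 * c0 + 1) <= e).
    { apply Rmult_le_reg_r with (/ (2 * c0 + 1)). apply Rinv_0_lt_compat; lra.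
      rewrite Rmult_assoc, Rinv_r by lra. lra. }
    nra. }
  intros t t' Ht Ht' Hd. destruct (Rtotal_order t t') as [Hl|[He'|Hg]].
  - rewrite Rabs_minus_sym. replace t' with ((t' - t) + t) by ring.
    apply Key; auto; try lra. rewrite Rabs_minus_sym, Rabs_right in Hd by lra. lra.
  - subst. rewrite Rminus_diag, Rabs_R0. lra.
  - replace t with ((t - t') + t') by ring.
    apply Key; auto; try lra. rewrite Rabs_right in Hd by lra. lra.
Qed.

Lemma gf_tail r phi v s n : good_family r phi -> 0 < v -> 0 <= s <= 1 ->
  exp (v * phi s) - sum_f_R0 (fun k => r v k * s ^ k) n <= 1 - sum_f_R0 (r v) n.
Proof.
  intros G Hv Hs.
  set (dd := fun m => sum_f_R0 (fun k => r v k - r v k * s ^ k) m).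
  assert (Hg : Un_growing dd).
  { intro m. unfold dd. rewrite tech5.
    assert (0 <= r v (S m) - r v (S m) * s ^ S m); [|lra].
    assert (s ^ S m <= 1) by (rewrite <- (pow1 (S m)); apply pow_incr; lra).
    pose proof (proj1 G v Hv (S m)). nra. }
  assert (Hc : Un_cv dd (1 - exp (v * phi s))).
  { intros e He. destruct (CV_minus _ _ _ _ (gf_sum1 r phi v G Hv) (proj1 (proj2 G) v Hv s Hs) e He) as [N HN].
    exists N. intros m Hm. unfold dd. rewrite minus_sum. apply HN; auto. }
  pose proof (growing_ineq _ _ Hg Hc n) as K. unfold dd in K. rewrite minus_sum in K. lra.
Qed.

Lemma core (g : R -> R) (r : R -> nat -> R) (phi L : R -> R) :
  (forall v, 0 <= g v) ->
  (forall t, 0 <= t -> Rint_0inf (fun v => g v * exp (- (t * v))) (L t)) ->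
  good_family r phi ->
  (forall s, 0 <= s <= 1 -> phi s <= 0) ->
  exists q, (forall k, Rint_0inf (fun v => g v * r v k) (q k)) /\ (forall k, 0 <= q k) /\
   (forall s, 0 <= s <= 1 -> infinite_sum (fun k => q k * s ^ k) (L (- phi s))).
Proof.
  intros Hg HL G Hphi.
  assert (HL0 : Rint_0inf g (L 0)).
  { apply Rint_ext with (fun v => g v * exp (- (0 * v))). intros; rewrite Rmult_0_l, Ropp_0, exp_0; ring.
    apply HL; lra. }
  assert (Hgi : forall x y, 0 < x -> x <= y -> ex_RInt g x y).
  { intros x y Hx Hxy. destruct (proj1 HL0 x y Hx Hxy) as [pr]. apply ex_RInt_Reals_1; auto. }
  assert (Hint : forall k x y, 0 < x -> x <= y -> inhabited (Riemann_integrable (fun v => g v * r v k) x y)).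
  { intros k x y Hx Hxy. constructor. apply ex_RInt_Reals_0.
    apply ex_RInt_mult_uc; auto. intros e He. destruct (gf_uc r phi k G e He) as [d [Hd K]].
    exists d. split; auto. intros t t' Ht Ht' Htt'. apply K; auto; lra. }
  assert (Hex : forall k, exists l, Rint_0inf (fun v => g v * r v k) l).
  { intro k. destruct (Rint_dominated (fun v => g v * r v k) g (L 0)) as [l [Hl _]]; eauto.
    - intros v Hv. apply Rmult_le_pos; auto. apply (proj1 G); auto.
    - intros v Hv. pose proof (gf_le1 r phi v k G Hv). pose proof (Hg v). nra. }
  set (q := fun k => proj1_sig (constructive_indefinite_description _ (Hex k))).
  assert (Hq : forall k, Rint_0inf (fun v => g v * r v k) (q k)).
  { intro k. unfold q. destruct (constructive_indefinite_description _ (Hex k)); auto. }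
  assert (Hq0 : forall k, 0 <= q k).
  { intro k. apply (Rint_nonneg _ _ ) with (2 := Hq k). intros v Hv. apply Rmult_le_pos; auto. apply (proj1 G); auto. }
  exists q. split; auto. split; auto.
  intros s Hs.
  set (T := L (- phi s)).
  assert (HT : Rint_0inf (fun v => g v * exp (v * phi s)) T).
  { apply Rint_ext with (fun v => g v * exp (- (- phi s * v))).
    intros v _. f_equal. f_equal. ring. apply HL. pose proof (Hphi s Hs); lra. }
  set (Sn := fun n v => sum_f_R0 (fun k => r v k * s ^ k) n).
  assert (HSn : forall n, Rint_0inf (fun v => g v * Sn n v) (sum_f_R0 (fun k => q k * s ^ k) n)).
  { induction n.
    - simpl. pose proof (Rint_lin _ _ _ _ (s ^ 0) Rint_zero (Hq 0%nat)) as K.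
      replace (0 + s ^ 0 * q 0%nat) with (q 0%nat * 1) in K by (simpl; ring).
      revert K. apply Rint_ext. intros v _. unfold Sn. simpl. ring.
    - pose proof (Rint_lin _ _ _ _ (s ^ S n) IHn (Hq (S n))) as K.
      rewrite tech5. replace (sum_f_R0 (fun k => q k * s ^ k) n + q (S n) * s ^ S n)
        with (sum_f_R0 (fun k => q k * s ^ k) n + s ^ S n * q (S n)) by ring.
      revert K. apply Rint_ext. intros v _. unfold Sn. rewrite tech5. ring. }
  assert (Hup : forall n, sum_f_R0 (fun k => q k * s ^ k) n <= T).
  { intro n. apply (Rint_le _ _ _ _ (HSn n) HT). intros v Hv. apply Rmult_le_compat_l; auto.
    unfold Sn. apply sum_incr. apply (proj1 (proj2 G)); auto.
    intro k. apply Rmult_le_pos. apply (proj1 G); auto. apply pow_le; lra. }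
  intros e He.
  destruct (proj2 HT (e / 2)) as [del [M [HdM KT]]]. lra.
  set (x := del / 2). set (y := M + 1).
  assert (Hx : 0 < x) by (unfold x; lra).
  assert (Hxy : x <= y) by (unfold x, y; lra).
  destruct (proj1 HT x y Hx Hxy) as [prF].
  specialize (KT x y prF Hx ltac:(unfold x; lra) ltac:(unfold y; lra)).
  destruct (proj1 HL0 x y Hx Hxy) as [prg].
  set (K := RiemannInt prg).
  assert (HK : 0 <= K) by (apply RI_nonneg; auto).
  assert (Hy : 0 < y) by lra.
  destruct (gf_sum1 r phi y G Hy (e / 2 / (K + 1))) as [N HN].
  { apply Rdiv_lt_0_compat; lra. }
  exists N. intros n Hn. specialize (HN n Hn). unfold Rdist in HN |- *.
  set (tl := 1 - sum_f_R0 (r y) n).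
  assert (Htl0 : 0 <= tl) by (unfold tl; pose proof (gf_psum_le1 r phi y n G Hy); lra).
  assert (Htl : tl * K <= e / 2).
  { rewrite Rabs_minus_sym in HN. fold tl in HN. rewrite Rabs_right in HN by lra.
    apply Rle_trans with (e / 2 / (K + 1) * (K + 1)). nra. right; field; lra. }
  destruct (proj1 (HSn n) x y Hx Hxy) as [prS].
  assert (HS1 : RiemannInt prS <= sum_f_R0 (fun k => q k * s ^ k) n).
  { apply (Rint_partial_le _ _ _ _ prS) with (2 := HSn n); auto.
    intros v Hv. apply Rmult_le_pos; auto. unfold Sn. apply cond_pos_sum.
    intro k. apply Rmult_le_pos. apply (proj1 G); auto. apply pow_le; lra. }
  assert (prC : Riemann_integrable (fun v => g v * exp (v * phi s) + (- tl) * g v) x y)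
    by (apply RiemannInt_P10; auto).
  assert (HS2 : RiemannInt prC <= RiemannInt prS).
  { apply RiemannInt_P19; auto. intros v Hv.
    assert (Hv0 : 0 < v) by lra.
    pose proof (gf_tail r phi v s n G Hv0 Hs).
    assert (sum_f_R0 (r y) n <= sum_f_R0 (r v) n).
    { replace y with (v + (y - v)) by ring. apply (gf_mono r phi); auto; lra. }
    assert (E1 : exp (v * phi s) - sum_f_R0 (fun k => r v k * s ^ k) n <= tl) by (unfold tl; lra).
    pose proof (Rmult_le_compat_l (g v) _ _ (Hg v) E1) as E2.
    rewrite Rmult_minus_distr_l in E2. unfold Sn. lra. }
  rewrite (RiemannInt_P13 prF prg prC) in HS2. fold K in HS2.
  pose proof (Hup n). apply Rabs_def2 in KT.
  apply Rabs_def1; lra.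
Qed.
Lemma sgn_cases a : (0 < a /\ sgn a = 1) \/ (a < 0 /\ sgn a = -1) \/ (a = 0 /\ sgn a = 0).
Proof.
  unfold sgn. destruct (Rlt_dec 0 a). left; auto.
  destruct (Rlt_dec a 0). right; left; auto. right; right; split; auto; lra.
Qed.

Lemma rpow_nonneg x a : 0 <= rpow x a.
Proof. unfold rpow. destruct (Rlt_dec 0 x). unfold Rpower. left; apply exp_pos. lra. Qed.

Lemma rpow_mono_pos a x y : 0 < a -> 0 <= x <= y -> rpow x a <= rpow y a.
Proof.
  intros Ha Hxy. unfold rpow. destruct (Rlt_dec 0 x); destruct (Rlt_dec 0 y); try lra.
  - unfold Rpower. apply exp_le. apply Rmult_le_compat_l; [lra|].
    destruct (Req_dec x y). subst; lra. left; apply ln_increasing; lra.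
  - unfold Rpower; left; apply exp_pos.
Qed.

Lemma rpow_mono_neg a x y : a < 0 -> 0 < x <= y -> rpow y a <= rpow x a.
Proof.
  intros Ha Hxy. unfold rpow. destruct (Rlt_dec 0 x); destruct (Rlt_dec 0 y); try lra.
  unfold Rpower. apply exp_le.
  assert (ln x <= ln y). { destruct (Req_dec x y). subst; lra. left; apply ln_increasing; lra. }
  nra.
Qed.

Lemma rpow_mul a x y : 0 < x -> 0 <= y -> rpow x a * rpow y a = rpow (x * y) a.
Proof.
  intros Hx Hy. unfold rpow. destruct (Rlt_dec 0 x); [|lra].
  destruct (Rlt_dec 0 y).
  - destruct (Rlt_dec 0 (x * y)). apply Rpower_mult_distr; auto.
    exfalso; apply n; apply Rmult_lt_0_compat; auto.
  - assert (y = 0) by lra. subst. rewrite !Rmult_0_r.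
    destruct (Rlt_dec 0 0); [lra|]. reflexivity.
Qed.

Lemma sgn_diff_le0 a X Y : 0 <= X <= Y -> (a < 0 -> 0 < X) ->
  sgn a * (rpow X a - rpow Y a) <= 0.
Proof.
  intros HXY Hneg. destruct (sgn_cases a) as [[Ha E]|[[Ha E]|[Ha E]]]; rewrite E.
  - pose proof (rpow_mono_pos a X Y Ha HXY). lra.
  - pose proof (rpow_mono_neg a X Y Ha ltac:(specialize (Hneg Ha); lra)). lra.
  - lra.
Qed.

Lemma cont_of_derive (f : R -> R) : (forall x, ex_derive f x) -> forall x, continuity_pt f x.
Proof. intros H x. apply continuity_pt_filterlim. exact (@ex_derive_continuous R_AbsRing R_NormedModule f x (H x)). Qed.

Lemma tf_lin f h c : test_fun f -> test_fun h -> test_fun (fun x => f x + c * h x).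
Proof.
  intros [Cf [Mf Hf]] [Ch [Mh Hh]]. split.
  - intro x. apply (continuity_pt_plus f (mult_real_fct c h)); auto.
    apply continuity_pt_scal; auto.
  - exists (Mf + Rabs c * Mh). intros x Hx.
    eapply Rle_trans. apply Rabs_triang. rewrite Rabs_mult.
    pose proof (Hf x Hx). pose proof (Hh x Hx).
    assert (Rabs c * Rabs (h x) <= Rabs c * Mh) by (apply Rmult_le_compat_l; auto; apply Rabs_pos).
    lra.
Qed.

Lemma tf_const c : test_fun (fun _ => c).
Proof.
  split. intro x. apply continuity_pt_const. intros y z; auto.
  exists (Rabs c). intros; lra.
Qed.

Lemma exp_series y : infinite_sum (fun i => / INR (fact i) * y ^ i) (exp y).
Proof. exact (proj2_sig (exist_exp y)). Qed.

Lemma pois_nonneg k y : 0 <= y -> 0 <= pois k y.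
Proof.
  intros Hy. unfold pois. apply Rmult_le_pos. apply Rmult_le_pos. left; apply exp_pos.
  apply pow_le; auto. left; apply Rinv_0_lt_compat, lt_0_INR, lt_O_fact.
Qed.

Lemma pois_le1 k y : 0 <= y -> pois k y <= 1.
Proof.
  intros Hy.
  assert (H1 : / INR (fact k) * y ^ k <= exp y).
  { eapply Rle_trans. apply (term_le_sum (fun i => / INR (fact i) * y ^ i)).
    intro j. apply Rmult_le_pos. left; apply Rinv_0_lt_compat, lt_0_INR, lt_O_fact. apply pow_le; auto.
    apply sum_incr. apply exp_series. intro j. apply Rmult_le_pos.
    left; apply Rinv_0_lt_compat, lt_0_INR, lt_O_fact. apply pow_le; auto. }
  unfold pois. replace (exp (- y) * y ^ k / INR (fact k)) with (exp (- y) * (/ INR (fact k) * y ^ k))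
    by (unfold Rdiv; ring).
  apply Rle_trans with (exp (- y) * exp y).
  apply Rmult_le_compat_l; auto. left; apply exp_pos.
  rewrite <- exp_plus. replace (- y + y) with 0 by ring. rewrite exp_0; lra.
Qed.

Lemma tf_pois k : test_fun (pois k).
Proof.
  split. apply cont_of_derive. intro x. unfold pois. auto_derive. auto.
  exists 1. intros y Hy. rewrite Rabs_right. apply pois_le1; auto. apply Rle_ge, pois_nonneg; auto.
Qed.

Lemma tf_exp t : 0 <= t -> test_fun (fun y => exp (- (t * y))).
Proof.
  intros Ht. split. apply cont_of_derive. intro x. auto_derive. auto.
  exists 1. intros y Hy. rewrite Rabs_right by (left; apply exp_pos).
  rewrite <- exp_0. apply exp_le. nra.
Qed.

Lemma E_lin E f h c : is_law_pos E -> test_fun f -> test_fun h ->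
  E (fun x => f x + c * h x) = E f + c * E h.
Proof.
  intros [E1 [E2 [E3 _]]] Tf Th.
  rewrite (E2 f (fun x => c * h x)); auto. rewrite E3; auto.
  replace (fun x => c * h x) with (fun x => 0 + c * h x) by (extensionality x; ring).
  apply tf_lin; auto. apply tf_const.
Qed.

Lemma E_zero E : is_law_pos E -> E (fun _ => 0) = 0.
Proof.
  intros HE. destruct HE as [E1 [E2 [E3 _]]].
  replace (fun _ : R => 0) with (fun x : R => 0 * (fun _ => 1) x) by (extensionality x; ring).
  rewrite E3. ring. apply tf_const.
Qed.

Lemma tps_pgf a w th E : 0 < w -> 0 <= th -> is_TPS a w th E ->
  forall s, 0 <= s <= 1 -> infinite_sum (fun k => E (pois k) * s ^ k)
     (exp (w * (sgn a * (rpow th a - rpow (th + (1 - s)) a)))).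
Proof.
  intros Hw Hth [HE HL] s Hs.
  pose proof HE as [E1 [E2 [E3 [E4 [E5 E6]]]]].
  set (t := 1 - s).
  assert (Ht : 0 <= t) by (unfold t; lra).
  set (V := exp (w * (sgn a * (rpow th a - rpow (th + t) a)))).
  assert (HV : E (fun y => exp (- (t * y))) = V).
  { destruct Ht as [Ht|Ht].
    - rewrite HL by auto. unfold V. f_equal. ring.
    - rewrite <- Ht. unfold V. rewrite <- Ht.
      rewrite Rplus_0_r, Rminus_diag, Rmult_0_r, Rmult_0_r, exp_0.
      rewrite <- E5. apply E1. intros. rewrite Rmult_0_l, Ropp_0, exp_0. auto. }
  set (P := fun n y => sum_f_R0 (fun k => pois k y * s ^ k) n).
  assert (HP : forall n, test_fun (P n) /\ E (P n) = sum_f_R0 (fun k => E (pois k) * s ^ k) n).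
  { induction n.
    - replace (P 0%nat) with (fun y => 0 + s ^ 0 * pois 0 y) by (extensionality y; unfold P; simpl; ring).
      split. apply tf_lin. apply tf_const. apply tf_pois.
      rewrite E_lin; auto. rewrite E_zero; auto. simpl; ring. apply tf_const. apply tf_pois.
    - destruct IHn as [T1 T2].
      replace (P (S n)) with (fun y => P n y + s ^ S n * pois (S n) y)
        by (extensionality y; unfold P; rewrite tech5; ring).
      split. apply tf_lin; auto. apply tf_pois.
      rewrite E_lin; auto. rewrite T2, tech5. ring. apply tf_pois. }
  set (fn := fun n y => exp (- (t * y)) + (-1) * P n y).
  assert (Tfn : forall n, test_fun (fn n)).
  { intro n. apply tf_lin. apply tf_exp; auto. apply HP. }
  assert (Efn : forall n, E (fn n) = V - sum_f_R0 (fun k => E (pois k) * s ^ k) n).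
  { intro n. unfold fn. rewrite E_lin; [| exact HE | apply tf_exp; auto | apply HP]. rewrite HV, (proj2 (HP n)). ring. }
  assert (Cv : Un_cv (fun n => E (fn n)) 0).
  { apply E6; auto.
    - intros n y Hy. unfold fn, P. rewrite tech5.
      pose proof (pois_nonneg (S n) y Hy). assert (0 <= s ^ S n) by (apply pow_le; lra).
      pose proof (Rmult_le_pos _ _ H H0). lra.
    - intros y Hy.
      assert (Hc : Un_cv (fun n => P n y) (exp (- (t * y)))).
      { replace (fun n => P n y) with (fun n => exp (- y) * sum_f_R0 (fun i => / INR (fact i) * (s * y) ^ i) n).
        2:{ extensionality n. unfold P. rewrite scal_sum. apply sum_eq. intros i _.
            unfold pois. rewrite Rpow_mult_distr. unfold Rdiv. ring. }
        replace (exp (- (t * y))) with (exp (- y) * exp (s * y)).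
        2:{ rewrite <- exp_plus. f_equal. unfold t. ring. }
        apply (CV_mult (fun _ => exp (- y))). apply Un_cv_const. apply exp_series. }
      pose proof (CV_plus _ _ _ _ (Un_cv_const (exp (- (t * y)))) (CV_mult _ _ _ _ (Un_cv_const (-1)) Hc)) as K.
      replace (exp (- (t * y)) + -1 * exp (- (t * y))) with 0 in K by ring. apply K. }
  intros e He. destruct (Cv e He) as [N HN]. exists N. intros n Hn. specialize (HN n Hn).
  unfold Rdist in *. rewrite Efn, Rminus_0_r in HN. rewrite Rabs_minus_sym. unfold t, V in HN. apply HN.
Qed.
Theorem mainTheorem8 (a b c d : R) (Hadm : TDL_admissible a b c d) :
  (* (i) Gamma mixture of TDS *)
  (forall (g : R -> R) (p : R -> nat -> R),
     is_gamma_density (b * d) d g ->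
     (forall v, 0 < v -> is_TDS a v c (p v)) ->
     exists q : nat -> R,
       (forall k, Rint_0inf (fun v => g v * p v k) (q k)) /\ is_TDL a b c d q) /\
  (* (ii) Poisson mixture of a Gamma mixture of TPS *)
  (0 < c <= 1 ->
   forall (g : R -> R) (E : R -> (R -> R) -> R),
     is_gamma_density (b * d * rpow c a) d g ->
     (forall w, 0 < w -> is_TPS a w (1 / c - 1) (E w)) ->
     exists q : nat -> R,
       (forall k, Rint_0inf (fun w => g w * E w (pois k)) (q k)) /\ is_TDL a b c d q).
Proof.
  destruct Hadm as [Hd [Hb Hac]].
  assert (Hc01 : 0 <= c <= 1) by (destruct Hac as [[_ H1]|[_ H1]]; lra).
  assert (Hneg : a < 0 -> c < 1) by (intro Ha0; destruct Hac as [[_ H1]|[H1 _]]; lra).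
  split.
  - intros g p [Hg HL] Hp.
    set (phi := fun s => sgn a * (rpow (1 - c) a - rpow (1 - c * s) a)).
    assert (G : good_family p phi).
    { split; [|split].
      - intros v Hv k. apply (proj1 (Hp v Hv)).
      - intros v Hv s Hs. pose proof (proj2 (Hp v Hv) s Hs) as K. unfold TDS_pgf in K.
        unfold phi. replace (v * (sgn a * (rpow (1 - c) a - rpow (1 - c * s) a))) with
          (sgn a * v * (rpow (1 - c) a - rpow (1 - c * s) a)) by ring. exact K.
      - unfold phi. rewrite Rmult_1_r. rewrite Rminus_diag. ring. }
    destruct (core g p phi (fun t => rpow (1 + b * d * t) (- (1 / d))) Hg HL G) as [q [Hq [Hq0 Hqs]]].
    { intros s Hs. unfold phi. apply sgn_diff_le0.
      split. lra. assert (c * s <= c) by nra. lra.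
      intro Ha; specialize (Hneg Ha); lra. }
    exists q. split; auto. split; auto.
    intros s Hs. specialize (Hqs s Hs). unfold TDL_pgf. unfold phi in Hqs.
    replace (1 + sgn a * b * d * (rpow (1 - c * s) a - rpow (1 - c) a)) with
      (1 + b * d * - (sgn a * (rpow (1 - c) a - rpow (1 - c * s) a))) by ring. exact Hqs.
  - intros Hc g E [Hg HL] HE.
    set (th := 1 / c - 1).
    assert (Hth : 0 <= th) by (unfold th; assert (1 <= 1 / c) by (apply Rmult_le_reg_r with c; [lra|]; field_simplify; lra); lra).
    set (phi := fun s => sgn a * (rpow th a - rpow (th + (1 - s)) a)).
    set (r := fun w k => E w (pois k)).
    assert (G : good_family r phi).
    { split; [|split].
      - intros w Hw k. unfold r. destruct (HE w Hw) as [[E1 [E2 [E3 [E4 _]]]] _].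
        apply E4. apply tf_pois. apply pois_nonneg.
      - intros w Hw s Hs. apply (tps_pgf a w th (E w)); auto.
      - unfold phi. replace (th + (1 - 1)) with th by ring. rewrite Rminus_diag. ring. }
    destruct (core g r phi (fun t => rpow (1 + b * d * rpow c a * t) (- (1 / d))) Hg HL G) as [q [Hq [Hq0 Hqs]]].
    { intros s Hs. unfold phi. apply sgn_diff_le0. lra.
      intro Ha; specialize (Hneg Ha). unfold th.
      assert (1 < 1 / c) by (apply Rmult_lt_reg_r with c; [lra|]; field_simplify; lra). lra. }
    exists q. split; auto. split; auto.
    intros s Hs. specialize (Hqs s Hs). unfold TDL_pgf. unfold phi in Hqs.
    assert (E1 : rpow c a * rpow th a = rpow (1 - c) a).
    { rewrite rpow_mul by lra. f_equal. unfold th. field. lra. }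
    assert (E2 : rpow c a * rpow (th + (1 - s)) a = rpow (1 - c * s) a).
    { rewrite rpow_mul by lra. f_equal. unfold th. field. lra. }
    replace (1 + sgn a * b * d * (rpow (1 - c * s) a - rpow (1 - c) a)) with
      (1 + b * d * rpow c a * - (sgn a * (rpow th a - rpow (th + (1 - s)) a))).
    exact Hqs. rewrite <- E1, <- E2. ring.
Qed.
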